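(* Let $\mathfrak p,\mathfrak p'$ be U-matroid polyhedra. Then $\mathfrak p'$ is a sheared polyhedron of $\mathfrak p$ (i.e. $\mathfrak p'\subseteq\mathfrak p$ and every vertex of $\mathfrak p$ is a vertex of $\mathfrak p'$) if and only if $\mathfrak p$ is the Minkowski sum $\mathfrak p'+\mathrm{rec}(\mathfrak p)$, where $\mathrm{rec}(\mathfrak p)=\{\mathbf{y}:\mathbf{x}+\mathbf{y}\in\mathfrak p\ \forall\mathbf{x}\in\mathfrak p\}$ is the recession cone of $\mathfrak p$.
   Context: A U-matroid polyhedron is a polyhedron $\mathfrak p\subset\mathbb{R}^n$ with at least one vertex, all of whose vertices are 0,1-vectors, and each of whose 1-dimensional faces (bounded edges or rays) is parallel to a difference of two standard basis vectors; equivalently, the base polyhedron $\{\mathbf{x}:\mathbf{x}(A)\le\rho(A)\ \forall A\in\mathcal{D},\ \mathbf{x}(E)=\rho(E)\}$ of a U-matroid $(E,\mathcal{D},\rho)$. *)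

(* Defs.v *)
From HB Require Import structures.
From mathcomp Require Import all_boot all_order all_algebra.
From mathcomp Require Import reals.
Set Implicit Arguments. Unset Strict Implicit. Unset Printing Implicit Defensive.
Import Order.TTheory GRing.Theory Num.Theory.
Local Open Scope ring_scope.

Section UMatroid.
Variables (R : realType) (n : nat).

Definition vec := 'rV[R]_n.
Definition region := vec -> Prop.

Definition dotv (u v : vec) : R := \sum_(j < n) u 0 j * v 0 j.

Definition evec (i : 'I_n) : vec := \row_(j < n) (if j == i then 1 else 0).

Definition polyhedron (P : region) : Prop :=
  exists (m : nat) (a : 'I_m -> vec) (b : 'I_m -> R),
    forall x, P x <-> (forall k, dotv (a k) x <= b k).

Definition is_face (P F : region) : Prop :=
  (exists x, F x) /\
  exists (c : vec) (d : R),
    (forall y, P y -> dotv c y <= d) /\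
    (forall x, F x <-> (P x /\ dotv c x = d)).

Definition is_vertex (P : region) (v : vec) : Prop :=
  is_face P (fun x => x = v).

Definition one_dim (F : region) : Prop :=
  (exists x y, F x /\ F y /\ x <> y) /\
  exists d : vec, forall x y, F x -> F y -> exists t : R, y - x = t *: d.

Definition parallel_to_ediff (F : region) : Prop :=
  exists i j : 'I_n, i <> j /\
    forall x y, F x -> F y -> exists t : R, y - x = t *: (evec i - evec j).

Definition zero_one_vec (v : vec) : Prop := forall j, v 0 j = 0 \/ v 0 j = 1.

Definition U_matroid_polyhedron (P : region) : Prop :=
  [/\ polyhedron P,
      exists v, is_vertex P v,
      forall v, is_vertex P v -> zero_one_vec v
    & forall F, is_face P F -> one_dim F -> parallel_to_ediff F].

Definition sheared (P P' : region) : Prop :=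
  (forall x, P' x -> P x) /\ (forall v, is_vertex P v -> is_vertex P' v).

Definition rec_cone (P : region) : region :=
  fun y => forall x, P x -> P (x + y).

Definition minkowski_sum (A B : region) : region :=
  fun z => exists x y, A x /\ B y /\ z = x + y.

End UMatroid.

(* Main.v *)
Require Import Defs.
From HB Require Import structures.
From mathcomp Require Import all_boot all_order all_algebra.
From mathcomp Require Import reals.
From mathcomp Require Import ring lra.
From Stdlib Require Import Classical.
Import Order.TTheory GRing.Theory Num.Theory.
Local Open Scope ring_scope.

Section Helpers.
Variables (R : realType) (n : nat).
Local Notation vec := (vec R n).

Lemma dotvDr (u x y : vec) : dotv u (x + y) = dotv u x + dotv u y.
Proof. by rewrite /dotv -big_split; apply: eq_bigr => j _; rewrite mxE mulrDr. Qed.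

Lemma dotvZr (u : vec) t (x : vec) : dotv u (t *: x) = t * dotv u x.
Proof. by rewrite /dotv mulr_sumr; apply: eq_bigr => j _; rewrite mxE mulrCA. Qed.

Lemma dotvNr (u x : vec) : dotv u (- x) = - dotv u x.
Proof. by rewrite /dotv -sumrN; apply: eq_bigr => j _; rewrite mxE mulrN. Qed.

Lemma dotvBr (u x y : vec) : dotv u (x - y) = dotv u x - dotv u y.
Proof. by rewrite dotvDr dotvNr. Qed.

Lemma dotv_suml (I : finType) (Q : pred I) (F : I -> vec) (y : vec) :
  dotv (\sum_(i | Q i) F i) y = \sum_(i | Q i) dotv (F i) y.
Proof.
rewrite /dotv exchange_big; apply: eq_bigr => j _.
by rewrite summxE mulr_suml.
Qed.

Lemma poly_convex (P : region R n) : polyhedron P ->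
  forall (x y : vec) l, P x -> P y -> 0 <= l -> l <= 1 -> P (l *: x + (1 - l) *: y).
Proof.
case=> m [a [b H]] x y l Px Py l0 l1; apply/H => k.
rewrite dotvDr !dotvZr.
have := proj1 (H x) Px k; have := proj1 (H y) Py k.
move=> hy hx.
have h1 : l * dotv (a k) x <= l * b k by rewrite ler_wpM2l.
have h2 : (1 - l) * dotv (a k) y <= (1 - l) * b k by rewrite ler_wpM2l // subr_ge0.
lra.
Qed.

Section Decomp.
Variables (m : nat) (a : 'I_m -> vec) (b : 'I_m -> R).
Definition inP (x : vec) := forall k, dotv (a k) x <= b k.
Definition ntight (x : vec) := #|[pred k | dotv (a k) x != b k]|.

Lemma boundary (z d : vec) : inP z ->
  (forall k, dotv (a k) z = b k -> dotv (a k) d = 0) ->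
  (exists k, 0 < dotv (a k) d) ->
  exists t, 0 < t /\ inP (z + t *: d) /\ (ntight (z + t *: d)%R < ntight z)%N.
Proof.
move=> Pz orth [k0 Pk0].
pose r k := (b k - dotv (a k) z) / dotv (a k) d.
pose Q := [pred k | 0 < dotv (a k) d].
have Qk0 : Q k0 by [].
have [k1 Qk1 Hmin] := arg_minP r Qk0.
have ntk1 : dotv (a k1) z != b k1.
  apply/eqP => e; move: (orth _ e) Qk1; rewrite /Q /= => ->; by rewrite ltxx.
have pos1 : 0 < b k1 - dotv (a k1) z.
  by rewrite subr_gt0 lt_neqAle ntk1 Pz.
have Qk1' : 0 < dotv (a k1) d := Qk1.
have tpos : 0 < r k1 by rewrite /r divr_gt0.
have key : forall k, Q k -> r k * dotv (a k) d = b k - dotv (a k) z.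
  by move=> k Qk; rewrite /r divfK // gt_eqF.
exists (r k1); split => //; split.
  move=> k; rewrite dotvDr dotvZr.
  case: (boolP (Q k)) => Qk.
    have := Hmin k Qk; have := key k Qk; rewrite /Q /= in Qk.
    move=> e h; have : r k1 * dotv (a k) d <= r k * dotv (a k) d.
      by rewrite ler_wpM2r // ltW.
    lra.
  rewrite /Q /= -leNgt in Qk.
  have : r k1 * dotv (a k) d <= 0 by rewrite mulr_ge0_le0 // ltW.
  have := Pz k; lra.
apply: proper_card; apply/properP; split.
  apply/subsetP => k; rewrite !inE; apply: contra => /eqP e.
  by rewrite dotvDr dotvZr (orth _ e) mulr0 addr0 e.
exists k1; rewrite !inE //.
rewrite negbK dotvDr dotvZr key //; apply/eqP; lra.
Qed.

Lemma decomp (P P' : region R n) : (forall x, P x <-> inP x) ->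
  (exists v, is_vertex P v) -> polyhedron P' ->
  (forall v, is_vertex P v -> P' v) ->
  forall z, P z -> minkowski_sum P' (rec_cone P) z.
Proof.
move=> HP [v0 Hv0] polyP' Hvert z Pz.
have convP : polyhedron P by exists m, a, b.
have recD : forall y, inP y -> (forall k, dotv (a k) y = b k -> True) -> True by [].
have recdir : forall y1 (d : vec), rec_cone P y1 -> (forall k, dotv (a k) d <= 0) ->
    rec_cone P (y1 + d).
  move=> y1 d ry hd w Pw; rewrite addrA; apply/HP => k.
rewrite dotvDr; have := proj1 (HP _) (ry w Pw) k; have := hd k; lra.
have rec0 : rec_cone P 0 by move=> w Pw; rewrite addr0.
have [N] := ubnP (ntight z); elim: N z Pz => // N IH z Pz lt.
have Iz := proj1 (HP z) Pz.
case: (classic (exists d : vec, d != 0 /\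
          forall k, dotv (a k) z = b k -> dotv (a k) d = 0)); last first.
  move=> nod.
  have vz : is_vertex P z.
    split; first by exists z.
    exists (\sum_(k | dotv (a k) z == b k) a k), (\sum_(k | dotv (a k) z == b k) b k).
    split.
      move=> y Py; rewrite dotv_suml; apply: ler_sum => k _.
      exact: (proj1 (HP y) Py k).
    move=> x; split.
      move=> ->; split => //; rewrite dotv_suml; apply: eq_bigr => k /eqP //.
    case=> Px; rewrite dotv_suml => /eqP; rewrite eq_sym -subr_eq0 -sumrB => /eqP e.
    have e2 := psumr_eq0P (fun i _ => (introT idP (etrans (subr_ge0 _ _) (proj1 (HP x) Px i)))) e.
    apply/eqP; rewrite -subr_eq0; apply/negPn/negP => ne.
    apply: nod; exists (x - z); split => // k ek.
    have := e2 k; rewrite ek eqxx => /(_ isT) h; rewrite dotvBr ek.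
    lra.
  exists z, 0; split; first exact: Hvert.
  by split => //; rewrite addr0.
move=> [d [dn0 orth]].
have orthN : forall k, dotv (a k) z = b k -> dotv (a k) (- d) = 0.
  by move=> k ek; rewrite dotvNr orth // oppr0.
have [k2 nz] : exists k, dotv (a k) d != 0.
  apply: NNPP => hn.
  have all0 : forall k, dotv (a k) d = 0.
    by move=> k; apply/eqP; apply/negPn/negP => h; apply: hn; exists k.
  case: Hv0 => _ [c [e [Hle Hiff]]].
  have [Pv cv] := proj1 (Hiff v0) erefl.
  have Pvd : P (v0 + d).
    by apply/HP => k; rewrite dotvDr all0 addr0; exact: (proj1 (HP _) Pv k).
  have Pvmd : P (v0 - d).
    by apply/HP => k; rewrite dotvBr all0 subr0; exact: (proj1 (HP _) Pv k).
  have h1 := Hle _ Pvd; have h2 := Hle _ Pvmd.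
  rewrite dotvDr in h1; rewrite dotvBr in h2.
  have cd : dotv c (v0 + d) = e by rewrite dotvDr; lra.
  have h := proj2 (Hiff (v0 + d)) (conj Pvd cd).
  by move: dn0; rewrite -(addKr v0 d) h addNr eqxx.
have ltN : forall z', (ntight z' < ntight z)%N -> (ntight z' < N)%N.
  by move=> z' h; apply: (leq_trans h); rewrite -ltnS.
have oneway : forall d', (forall k, dotv (a k) z = b k -> dotv (a k) d' = 0) ->
    (exists k, 0 < dotv (a k) d') -> (forall k, 0 <= dotv (a k) d') ->
    minkowski_sum P' (rec_cone P) z.
  move=> d' o' ex' nn'.
  have [t [tp [It lt']]] := boundary _ _ Iz o' ex'.
  have [x [y [Px' [ry ez]]]] := IH _ (proj2 (HP _) It) (ltN _ lt').
  exists x, (y + t *: (- d')); split => //; split.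
    apply: recdir => // k; rewrite dotvZr dotvNr mulrN oppr_le0.
    by rewrite mulr_ge0 // ltW.
  by rewrite addrA -ez scalerN addrK.
case: (classic (exists k, 0 < dotv (a k) d)) => [pos|npos].
  case: (classic (exists k, 0 < dotv (a k) (- d))) => [neg|nneg]; last first.
    apply: (oneway d orth pos) => k; rewrite leNgt; apply/negP => h; apply: nneg.
    by exists k; rewrite dotvNr oppr_gt0.
  have [t1 [tp1 [I1 l1]]] := boundary _ _ Iz orth pos.
  have [t2 [tp2 [I2 l2]]] := boundary _ _ Iz orthN neg.
  have [x1 [y1 [P1 [r1 e1]]]] := IH _ (proj2 (HP _) I1) (ltN _ l1).
  have [x2 [y2 [P2 [r2 e2]]]] := IH _ (proj2 (HP _) I2) (ltN _ l2).
  pose l := t2 / (t1 + t2).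
  have t12 : 0 < t1 + t2 by rewrite addr_gt0.
  have l0 : 0 <= l by rewrite /l divr_ge0 // ltW.
  have l1' : l <= 1 by rewrite /l ler_pdivrMr // mul1r; lra.
  exists (l *: x1 + (1 - l) *: x2), (l *: y1 + (1 - l) *: y2); split.
    exact: (@poly_convex P' polyP' _ _ _ P1 P2 l0 l1').
  split.
    move=> w Pw; have := @poly_convex P convP _ _ _ (r1 w Pw) (r2 w Pw) l0 l1'.
    have -> : w + (l *: y1 + (1 - l) *: y2) = l *: (w + y1) + (1 - l) *: (w + y2).
      by apply/rowP => j; rewrite !mxE; ring.
    by [].
  apply/rowP => j.
  have := congr1 (fun M : 'M[R]_(1, n) => M 0 j) e1; have := congr1 (fun M : 'M[R]_(1, n) => M 0 j) e2.
  rewrite /= !mxE => h2 h1.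
  have hx1 : x1 0 j = z 0 j + t1 * d 0 j - y1 0 j by rewrite h1 addrK.
  have hx2 : x2 0 j = z 0 j + t2 * - d 0 j - y2 0 j by rewrite h2 addrK.
  rewrite hx1 hx2 /l; field; lra.
apply: (oneway (- d) orthN).
  exists k2; rewrite dotvNr oppr_gt0 lt_neqAle nz /= leNgt; apply/negP => h.
  by apply: npos; exists k2.
move=> k; rewrite dotvNr oppr_ge0 leNgt; apply/negP => h.
by apply: npos; exists k.
Qed.
End Decomp.
End Helpers.

Theorem proposition4p6 (R : realType) (n : nat) (P P' : region R n) :
  U_matroid_polyhedron P -> U_matroid_polyhedron P' ->
  (sheared P P' <->
   (forall z, P z <-> minkowski_sum P' (rec_cone P) z)).
Proof.
move=> [polyP [v0 Hv0] _ _] [polyP' _ _ _]; split.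
  case=> sub vert z; split.
    move=> Pz; case: (polyP) => m [a [b HP]].
    have hv : forall v, is_vertex P v -> P' v.
      move=> v /vert [_ [c [e [_ Hiff]]]]; exact: (proj1 (proj1 (Hiff v) erefl)).
    exact: (@decomp R n m a b P P' HP (ex_intro _ v0 Hv0) polyP' hv z Pz).
  by case=> x [y [Px [ry ->]]]; exact: (ry x (sub x Px)).
move=> Heq.
have sub : forall x, P' x -> P x.
  move=> x Px; apply/Heq; exists x, 0; split => //; split.
    by move=> w Pw; rewrite addr0.
  by rewrite addr0.
split => // v [_ [c [e [Hle Hiff]]]].
have [Pv cv] := proj1 (Hiff v) erefl.
have [x [y [Px [ry ev]]]] := proj1 (Heq v) Pv.
have cy : dotv c y <= 0.
  by have := Hle _ (ry v Pv); rewrite dotvDr; lra.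
have cx : dotv c x = e.
  have := Hle _ (sub _ Px).
  have : dotv c v = dotv c x + dotv c y by rewrite ev dotvDr.
  lra.
have xv : x = v := proj2 (Hiff x) (conj (sub _ Px) cx).
split; first by exists v.
exists c, e; split.
  by move=> y' Py'; exact: (Hle _ (sub _ Py')).
move=> x'; split.
  by move=> ->; split => //; rewrite -xv.
by case=> Px' cx'; exact: (proj2 (Hiff x') (conj (sub _ Px') cx')).
Qed.
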